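(* Let $p\in\mathbb{T}^{\mathcal{P}([n])}$ be a tropical Wick vector. Then the cocycle space $\mathcal{Q}(p)\subseteq\mathbb{T}^{\mathcal{J}}$ of $p$ is the set of admissible vectors in the tropical convex hull of the cocircuits of $p$.
   Context: $\mathbb{T}=\mathbb{R}\cup\{\infty\}$ with $\oplus=\min$, $\odot=+$; $\mathcal{P}([n])$ the set of subsets of $[n]$. A tropical Wick vector is $p$ such that for all $S,T\subseteq[n]$ the minimum $\min_{i\in S\Delta T}(p_{S\Delta\{i\}}+p_{T\Delta\{i\}})$ is attained at least twice or equals $\infty$. Let $\mathcal{J}=\{1,\dots,n,1^*,\dots,n^*\}$ with involution $i\leftrightarrow i^*$; $X\subseteq\mathcal{J}$ is admissible if $X\cap X^*=\emptyset$, and a vector in $\mathbb{T}^{\mathcal{J}}$ is admissible if its support (coordinates $\neq\infty$) is admissible. For $S\subseteq[n]$ let $\bar S=S\cup\{i^*:i\in[n]\setminus S\}$ and $\bar p_{\bar S}:=p_S$. For $T\subseteq[n]$: $(c_T)_i=\bar p_{\bar T\Delta\{i,i^*\}}$ if $i\in\bar T$, $\infty$ otherwise; $(c^*_T)_i=\bar p_{\bar T\Delta\{i,i^*\}}$ if $i\notin\bar T$, $\infty$ otherwise. Circuits of $p$: $c_T+\lambda\mathbf{1}$ ($\lambda\in\mathbb{R}$) with nonempty support; cocircuits: $c^*_T+\lambda\mathbf{1}$ with nonempty support. $x,y$ are tropically orthogonal if $\min_k(x_k+y_k)$ is attained at least twice or equals $\infty$. The cocycle space $\mathcal{Q}(p)$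 is the set of admissible vectors tropically orthogonal to all circuits of $p$. The tropical convex hull of a set $A$ is the set of finite tropical linear combinations $\lambda_1\odot a_1\oplus\cdots\oplus\lambda_r\odot a_r$, $a_k\in A$, $\lambda_k\in\mathbb{T}$. *)

(* Defs.v *)
(* Tropical semiring T = R ∪ {∞} modelled as option R,
   with None = ∞, over an arbitrary R : realType (the real numbers). *)
From HB Require Import structures.
From mathcomp Require Import all_boot all_order all_algebra.
From mathcomp Require Import reals.

Set Implicit Arguments. Unset Strict Implicit. Unset Printing Implicit Defensive.
Import Order.TTheory GRing.Theory Num.Theory.
Local Open Scope ring_scope.

Section Trop.
Variable R : realType.

Definition tle (a b : option R) : bool :=
  match a, b with
  | _, None => true
  | None, Some _ => false
  | Some x, Some y => (x <= y)%R
  end.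

(* tropical multiplication ⊙ = + *)
Definition tadd (a b : option R) : option R :=
  match a, b with Some x, Some y => Some (x + y) | _, _ => None end.

Definition tmin (a b : option R) : option R := if tle a b then a else b.

Definition min_twice (I : finType) (S : {set I}) (f : I -> option R) : Prop :=
  (forall k, k \in S -> f k = None) \/
  exists k l, [/\ k \in S, l \in S, k != l, f k = f l &
                  forall j, j \in S -> tle (f k) (f j)].

Definition symd (I : finType) (A B : {set I}) : {set I} := (A :\: B) :|: (B :\: A).

Definition wick (n : nat) (p : {set 'I_n} -> option R) : Prop :=
  forall S T : {set 'I_n},
    min_twice (symd S T) (fun i => tadd (p (symd S [set i])) (p (symd T [set i]))).

(* J = {1..n, 1*..n*}: (i, true) is i, (i, false) is i* *)
Definition star (n : nat) (x : 'I_n * bool) : 'I_n * bool := (x.1, ~~ x.2).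

Definition admissible_set (n : nat) (X : {set 'I_n * bool}) : Prop :=
  forall x, x \in X -> star x \notin X.

Definition supp (n : nat) (v : 'I_n * bool -> option R) : {set 'I_n * bool} :=
  [set x | v x != None].

Definition admissible (n : nat) (v : 'I_n * bool -> option R) : Prop :=
  admissible_set (supp v).

(* S̄ = S ∪ {i* : i ∉ S} *)
Definition bar (n : nat) (S : {set 'I_n}) : {set 'I_n * bool} :=
  [set x : 'I_n * bool | x.2 == (x.1 \in S)].

(* p̄_{S̄} := p_S (and ∞ on sets not of the form S̄, never used below) *)
Definition pbar (n : nat) (p : {set 'I_n} -> option R) (X : {set 'I_n * bool})
  : option R :=
  match [pick S0 | bar S0 == X] with Some S0 => p S0 | None => None end.

Definition circ (n : nat) (p : {set 'I_n} -> option R) (T : {set 'I_n})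
  (j : 'I_n * bool) : option R :=
  if j \in bar T then pbar p (symd (bar T) [set j; star j]) else None.

Definition cocirc (n : nat) (p : {set 'I_n} -> option R) (T : {set 'I_n})
  (j : 'I_n * bool) : option R :=
  if j \notin bar T then pbar p (symd (bar T) [set j; star j]) else None.

Definition shift (n : nat) (v : 'I_n * bool -> option R) (lam : R)
  (j : 'I_n * bool) : option R := tadd (v j) (Some lam).

Definition is_circuit (n : nat) (p : {set 'I_n} -> option R)
  (v : 'I_n * bool -> option R) : Prop :=
  exists (T : {set 'I_n}) (lam : R),
    (forall j, v j = shift (circ p T) lam j) /\ supp v != set0.

Definition is_cocircuit (n : nat) (p : {set 'I_n} -> option R)
  (v : 'I_n * bool -> option R) : Prop :=
  exists (T : {set 'I_n}) (lam : R),
    (forall j, v j = shift (cocirc p T) lam j) /\ supp v != set0.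

Definition torth (n : nat) (x y : 'I_n * bool -> option R) : Prop :=
  min_twice [set: 'I_n * bool] (fun k => tadd (x k) (y k)).

Definition cocycle (n : nat) (p : {set 'I_n} -> option R)
  (x : 'I_n * bool -> option R) : Prop :=
  admissible x /\ forall v, is_circuit p v -> torth x v.

Definition tconv (n : nat) (A : ('I_n * bool -> option R) -> Prop)
  (x : 'I_n * bool -> option R) : Prop :=
  exists (r : nat) (a : 'I_r -> 'I_n * bool -> option R) (lam : 'I_r -> option R),
    (forall k, A (a k)) /\
    forall j, x j = \big[tmin/None]_(k < r) tadd (lam k) (a k j).

End Trop.

(* Main.v *)
Require Import Defs.
From HB Require Import structures.
From mathcomp Require Import all_boot all_order all_algebra.
From mathcomp Require Import reals.
From Stdlib Require Import IndefiniteDescription.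
From mathcomp Require Import lra.
Set Implicit Arguments. Unset Strict Implicit. Unset Printing Implicit Defensive.
Import Order.TTheory GRing.Theory Num.Theory.
Local Open Scope ring_scope.

Lemma tle_refl (R : realType) (a : option R) : tle a a.
Proof. by case: a => //= x. Qed.

Lemma tle_trans (R : realType) (a b c : option R) : tle a b -> tle b c -> tle a c.
Proof. by case: a; case: b; case: c => //= x y z; apply: le_trans. Qed.

Lemma tle_total (R : realType) (a b : option R) : tle a b || tle b a.
Proof. by case: a; case: b => //= x y; apply: le_total. Qed.

Lemma tle_anti (R : realType) (a b : option R) : tle a b -> tle b a -> a = b.
Proof. by case: a; case: b => //= x y h1 h2; congr Some; apply/eqP; rewrite eq_le h1 h2. Qed.

Lemma tleNone (R : realType) (a : option R) : tle None a -> a = None.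
Proof. by case: a. Qed.

Lemma tle_tadd (R : realType) (a b c : option R) : tle a b -> tle (tadd a c) (tadd b c).
Proof. by case: a; case: b; case: c => //= x y z; rewrite lerD2r. Qed.

Lemma taddC (R : realType) (a b : option R) : tadd a b = tadd b a.
Proof. by case: a; case: b => //= x y; rewrite addrC. Qed.

Lemma taddA (R : realType) (a b c : option R) : tadd a (tadd b c) = tadd (tadd a b) c.
Proof. by case: a; case: b; case: c => //= x y z; rewrite addrA. Qed.

Lemma big_tmin_le_seq (R : realType) (I : eqType) (s : seq I) (F : I -> option R) k :
  k \in s -> tle (\big[@tmin R/None]_(i <- s) F i) (F k).
Proof.
elim: s => [|a s IH] //; rewrite big_cons inE; set b := \big[_/_]_(j <- s) F j.
move=> /orP[/eqP ->|ks].
  rewrite /tmin; case: ifP => [_|]; first exact: tle_refl.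
  by move=> h; have := tle_total (F a) b; rewrite h.
have := IH ks; rewrite /tmin; case: ifP => // h1 h2; exact: tle_trans h1 h2.
Qed.

Lemma big_tmin_le (R : realType) r (F : 'I_r -> option R) k :
  tle (\big[@tmin R/None]_(i < r) F i) (F k).
Proof. by apply: big_tmin_le_seq; rewrite mem_index_enum. Qed.

Lemma big_tmin_attained (R : realType) r (F : 'I_r -> option R) :
  \big[@tmin R/None]_(i < r) F i = None \/ exists k, \big[@tmin R/None]_(i < r) F i = F k.
Proof.
apply: (big_rec (fun b => b = None \/ exists k, b = F k)); first by left.
move=> i b _ Hb; rewrite /tmin; case: ifP => _; last exact: Hb.
by right; exists i.
Qed.
Lemma in_symd (I : finType) (A B : {set I}) x : (x \in symd A B) = (x \in A) (+) (x \in B).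
Proof. by rewrite /symd !inE; case: (x \in A); case: (x \in B). Qed.

Lemma in_bar n (S : {set 'I_n}) (k : 'I_n * bool) : (k \in bar S) = (k.2 == (k.1 \in S)).
Proof. by rewrite /bar inE. Qed.

Lemma in_bar_symd1 n (S : {set 'I_n}) u (k : 'I_n * bool) :
  (k \in bar (symd S [set u])) = (k \in bar S) (+) (k.1 == u).
Proof. rewrite !in_bar in_symd inE; case: k => [k1 [|]] /=; by case: (k1 \in S); case: (k1 == u). Qed.

Lemma bar_symd n (T : {set 'I_n}) (j : 'I_n * bool) :
  symd (bar T) [set j; star j] = bar (symd T [set j.1]).
Proof.
apply/setP => k; rewrite in_bar_symd1 in_symd !inE.
case: k j => [k1 k2] [j1 j2] /=; rewrite !xpair_eqE.
case: (k1 == j1); last by rewrite !andFb.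
by case: k2; case: j2.
Qed.

Lemma bar_inj n : injective (@bar n).
Proof.
move=> S1 S2 h; apply/setP => i.
have : ((i, true) \in bar S1) = ((i, true) \in bar S2) by rewrite h.
by rewrite !in_bar /=; case: (i \in S1); case: (i \in S2).
Qed.

Lemma pbar_bar (R : realType) n (p : {set 'I_n} -> option R) S : pbar p (bar S) = p S.
Proof.
rewrite /pbar; case: pickP => [S0 /eqP /bar_inj -> //|].
by move=> /(_ S); rewrite eqxx.
Qed.

Lemma circE (R : realType) n (p : {set 'I_n} -> option R) T j :
  circ p T j = if j \in bar T then p (symd T [set j.1]) else None.
Proof. by rewrite /circ bar_symd pbar_bar. Qed.

Lemma cocircE (R : realType) n (p : {set 'I_n} -> option R) T j :
  cocirc p T j = if j \notin bar T then p (symd T [set j.1]) else None.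
Proof. by rewrite /cocirc bar_symd pbar_bar. Qed.

Lemma same1 n (k a : 'I_n * bool) : k.1 = a.1 -> k = a \/ k = star a.
Proof. case: k a => [k1 k2] [a1 a2] /= ->; rewrite /star /=; by case: k2; case: a2; auto. Qed.

Lemma star_bar n (S : {set 'I_n}) k : (star k \in bar S) = ~~ (k \in bar S).
Proof. by rewrite !in_bar /star /=; case: k => k1 [|] /=; case: (k1 \in S). Qed.

Lemma starK n : involutive (@star n).
Proof. by case=> a b; rewrite /star /= negbK. Qed.

Lemma bar_same1 n (S : {set 'I_n}) (k a : 'I_n * bool) :
  k.1 = a.1 -> (k \in bar S) = (a \in bar S) -> k = a.
Proof.
move=> /same1 [//|->]; rewrite star_bar; by case: (a \in bar S).
Qed.

Lemma swap_mem n (S S' : {set 'I_n}) (A : {set 'I_n * bool}) (a b : 'I_n * bool) :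
  admissible_set A -> a \in bar S -> a \in A -> b \notin bar S -> a.1 != b.1 ->
  (forall k, (k \in bar S') = (k \in bar S) (+) (k.1 == a.1) (+) (k.1 == b.1)) ->
  forall k, k \in A ->
   ((k \in bar S') -> (k == b) || ((k != a) && (k \in bar S))) /\
   (b \in A -> (k == b) || ((k != a) && (k \in bar S)) -> k \in bar S').
Proof.
move=> adm aS aA bS ab HS' k kA; rewrite HS'.
have [ka|ka] := eqVneq k.1 a.1.
  have kb : (k.1 == b.1) = false by rewrite ka (negbTE ab).
  have ek : k = a.
    case: (same1 ka) => // ek; by move: kA; rewrite ek (negbTE (adm _ aA)).
  subst k; rewrite aS eqxx kb /=; split => // _; rewrite (negbTE _ : (a == b) = false) //.
  by apply: contraNneq ab => ->.
have [kb|kb] := eqVneq k.1 b.1.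
  rewrite addbF addbT; split.
    move=> kS; by rewrite (@bar_same1 _ S _ _ kb) ?eqxx // (negbTE kS) (negbTE bS).
  move=> bA /orP[/eqP ->|/andP[_ kS]]; first by rewrite bS.
  case: (same1 kb) => ek; first by move: kS; rewrite ek (negbTE bS).
  by move: kA; rewrite ek (negbTE (adm _ bA)).
rewrite addbF addbF; split => [kS|_ /orP[/eqP ek|/andP[_ //]]].
  by rewrite kS andbT; apply/orP; right; apply: contraNneq ka => ->.
by move: kb; rewrite ek eqxx.
Qed.

Lemma swap_set n (S S' : {set 'I_n}) (A : {set 'I_n * bool}) (a b : 'I_n * bool) :
  admissible_set A -> a \in bar S -> a \in A -> b \notin bar S -> a.1 != b.1 ->
  (forall k, (k \in bar S') = (k \in bar S) (+) (k.1 == a.1) (+) (k.1 == b.1)) ->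
  b \in A -> bar S' :&: A = b |: ((bar S :&: A) :\ a).
Proof.
move=> adm aS aA bS ab HS' bA; apply/setP => k; rewrite in_setI in_setU1 in_setD1 in_setI.
have [kA|kA] := boolP (k \in A); last first.
  rewrite !andbF orbF; apply/esym/negbTE; by apply: contraNneq kA => ->.
have [h1 h2] := swap_mem adm aS aA bS ab HS' kA.
rewrite !andbT; apply/idP/idP; [exact: h1 | exact: h2].
Qed.

Lemma swap_sub n (S S' : {set 'I_n}) (A : {set 'I_n * bool}) (a b : 'I_n * bool) :
  admissible_set A -> a \in bar S -> a \in A -> b \notin bar S -> a.1 != b.1 ->
  (forall k, (k \in bar S') = (k \in bar S) (+) (k.1 == a.1) (+) (k.1 == b.1)) ->
  b \notin A -> bar S' :&: A \subset (bar S :&: A) :\ a.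
Proof.
move=> adm aS aA bS ab HS' bA; apply/subsetP => k; rewrite in_setI in_setD1 in_setI => /andP[kS' kA].
have [h1 _] := swap_mem adm aS aA bS ab HS' kA.
case/orP: (h1 kS') => [/eqP ek|/andP[-> ->]]; last by rewrite kA.
by move: bA; rewrite -ek kA.
Qed.

Lemma symdK1 n (S : {set 'I_n}) u : symd (symd S [set u]) [set u] = S.
Proof. by apply/setP => i; rewrite !in_symd -addbA addbb addbF. Qed.

Lemma big_tmin_attained_seq (R : realType) (I : Type) (s : seq I) (F : I -> option R) :
  \big[@tmin R/None]_(i <- s) F i = None \/ exists k, \big[@tmin R/None]_(i <- s) F i = F k.
Proof.
apply: (big_rec (fun b => b = None \/ exists k, b = F k)); first by left.
move=> i b _ Hb; rewrite /tmin; case: ifP => _; last exact: Hb.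
by right; exists i.
Qed.

Lemma exists_tmin (R : realType) (I : finType) (f : I -> option R) (i0 : I) :
  exists i, forall j, tle (f i) (f j).
Proof.
have Hle j : tle (\big[@tmin R/None]_(i <- index_enum I) f i) (f j).
  by apply: big_tmin_le_seq; rewrite mem_index_enum.
case: (big_tmin_attained_seq (index_enum I) f) => [E|[k E]].
  exists i0 => j; have := Hle j; rewrite E => /tleNone ->; by case: (f i0).
by exists k => j; rewrite -E.
Qed.

Lemma tle_None (R : realType) (a : option R) : tle a None.
Proof. by case: a. Qed.

Lemma tle_Some (R : realType) (a b : option R) : tle a b -> b != None -> a != None.
Proof. by case: a; case: b. Qed.

Lemma torth_ext (R : realType) n (x x' v v' : 'I_n * bool -> option R) :
  (forall j, x j = x' j) -> (forall j, v j = v' j) -> torth x' v' -> torth x v.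
Proof.
move=> Hx Hv [H|[k [l [k1 l1 kl e m]]]]; [left|right].
  by move=> k kS; rewrite Hx Hv; apply: H.
exists k, l; split => //; first by rewrite !Hx !Hv.
by move=> j jS; rewrite !Hx !Hv; apply: m.
Qed.

Lemma torth_conv (R : realType) n (c : 'I_n * bool -> option R) r
  (a : 'I_r -> 'I_n * bool -> option R) (lam : 'I_r -> option R) x :
  (forall k, torth (a k) c) ->
  (forall j, x j = \big[@tmin R/None]_(k < r) tadd (lam k) (a k j)) -> torth x c.
Proof.
move=> Ha Hx; rewrite /torth /min_twice.
set f := fun k => tadd (x k) (c k).
have [allN|] := boolP [forall j, f j == None].
  by left => k _; apply/eqP; move/forallP: allN; apply.
rewrite negb_forall => /existsP [j1 fj1].
have [j0 Hj0] := exists_tmin f j1.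
have fj0 : f j0 != None by apply: tle_Some (Hj0 j1) fj1.
have xj0 : x j0 != None by move: fj0; rewrite /f; case: (x j0).
case: (big_tmin_attained (fun k => tadd (lam k) (a k j0))) => [E|[k E]].
  by move: xj0; rewrite Hx E.
have Hfk j : tle (f j) (tadd (lam k) (tadd (a k j) (c j))).
  rewrite taddA /f; apply: tle_tadd; rewrite Hx.
  exact: (big_tmin_le (fun k => tadd (lam k) (a k j)) k).
have Ef0 : f j0 = tadd (lam k) (tadd (a k j0) (c j0)) by rewrite taddA /f Hx E.
case: (Ha k) => [H|[k1 [k2 [_ _ k12 e m]]]].
  by move: fj0; rewrite Ef0 H ?in_setT // taddC.
have Hk1 : forall kk, tadd (a k kk) (c kk) = tadd (a k k1) (c k1) -> f kk = f j0.
  move=> kk ekk; apply: tle_anti; last exact: Hj0.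
  apply: tle_trans (Hfk kk) _; rewrite Ef0 ekk !(taddC (lam k)); apply: tle_tadd.
  exact: m (in_setT _).
right; exists k1, k2; split; rewrite ?in_setT //.
  by move: (Hk1 k1 erefl) (Hk1 k2 (esym e)); rewrite /f => -> ->.
by move=> j _; move: (Hk1 k1 erefl) (Hj0 j); rewrite /f => ->.
Qed.

Lemma cocirc_circ_orth (R : realType) n (p : {set 'I_n} -> option R) T U lam mu :
  wick p -> torth (shift (cocirc p U) lam) (shift (circ p T) mu).
Proof.
move=> W; rewrite /torth /min_twice.
pose g := fun i => tadd (p (symd T [set i])) (p (symd U [set i])).
pose f := fun k => tadd (shift (cocirc p U) lam k) (shift (circ p T) mu k).
change (min_twice [set: 'I_n * bool] f).
have Ef k : f k = if (k \in bar T) && (k \notin bar U)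
                  then tadd (g k.1) (Some (lam + mu)) else None.
  rewrite /f /g /shift cocircE circE.
  case: (k \in bar T); case: (k \in bar U) => //=;
  case: (p (symd T [set k.1])) => [a|] //; case: (p (symd U [set k.1])) => [b|] //=.
  by congr Some; rewrite addrACA (addrC b).
have Hk k : (k \in bar T) && (k \notin bar U) = (k.1 \in symd T U) && (k == (k.1, k.1 \in T)).
  rewrite !in_bar in_symd; case: k => k1 k2 /=; rewrite xpair_eqE eqxx /=.
  by case: k2; case: (k1 \in T); case: (k1 \in U).
case: (W T U) => [H|[i1 [i2 [i1S i2S i12 e m]]]].
  left => k _; rewrite Ef Hk; case: ifP => // /andP[kS _].
  by rewrite /g (H _ kS).
right; exists (i1, i1 \in T), (i2, i2 \in T); split; rewrite ?in_setT //.
- by rewrite xpair_eqE negb_and i12.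
- rewrite !Ef !Hk /= i1S i2S !eqxx /=; by congr tadd.
move=> j _; rewrite !Ef !Hk /= i1S eqxx /=.
case: ifP => [/andP[jS _]|_]; last exact: tle_None.
by apply: tle_tadd; apply: m.
Qed.

Lemma hard (R : realType) n (p : {set 'I_n} -> option R) (x : 'I_n * bool -> option R) :
  admissible x -> (forall v, is_circuit p v -> torth x v) -> (exists S, p S != None) ->
  forall j, x j != None ->
  exists y, is_cocircuit p y /\ y j = x j /\ forall k, tle (x k) (y k).
Proof.
move=> adm orth [S0 pS0] j xj.
pose A := supp x.
have inA k : (k \in A) = (x k != None) by rewrite /A /supp inE.
pose N S := #|bar S :&: A|.
pose xr k := odflt 0 (x k).
pose pr S := odflt 0 (p S).
pose F S := pr S - \sum_(k in bar S :&: A) xr k.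
have exN : exists m, [exists S, (p S != None) && (N S == m)].
  by exists (N S0); apply/existsP; exists S0; rewrite pS0 eqxx.
case: (ex_minnP exN) => N0 /existsP [S1 /andP[pS1 /eqP NS1]] Hmin.
have HminS S : p S != None -> (N0 <= N S)%N.
  by move=> pS; apply: Hmin; apply/existsP; exists S; rewrite pS eqxx.
pose Good S := (p S != None) && (N S == N0).
pose key S := if Good S then Some (F S) else None.
have [Sm Hm] := exists_tmin key S1.
have G1 : Good S1 by rewrite /Good pS1 NS1 eqxx.
have GSm : Good Sm by move: (Hm S1); rewrite /key G1; case: (Good Sm).
have FSm S : Good S -> F Sm <= F S by move=> GS; move: (Hm S); rewrite /key GSm GS.
have C1 : exists S, (Good S /\ forall S', Good S' -> F S <= F S') /\ j \in bar S.
  have [jS|jS] := boolP (j \in bar Sm); first by exists Sm.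
  pose T := symd Sm [set j.1].
  have jT : j \in bar T by rewrite in_bar_symd1 (negbTE jS) eqxx.
  move/andP: (GSm) => [pSm /eqP NSm].
  case E: (p Sm) pSm => [ps|] // _.
  case Ex: (x j) xj => [xjv|] // _.
  pose v := shift (circ p T) 0.
  have vj : v j = Some (ps + 0) by rewrite /v /shift circE jT symdK1 E.
  have circ_v : is_circuit p v.
    by exists T, 0; split => //; apply/set0Pn; exists j; rewrite inE vj.
  case: (orth v circ_v) => [H|[k1 [k2 [_ _ k12 e mn]]]].
    by move: (H j (in_setT _)); rewrite Ex vj.
  have [m [mj fm]] : exists m, m != j /\ tadd (x m) (v m) = tadd (x k1) (v k1).
    case: (eqVneq k1 j) => [ek|nk]; last by exists k1.
    by exists k2; split => //; rewrite -ek eq_sym.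
  have fmj : tle (tadd (x m) (v m)) (tadd (x j) (v j)) by rewrite fm; apply: mn; rewrite in_setT.
  rewrite Ex vj in fmj.
  case Exm: (x m) fmj => [xm|] //.
  case Evm: (v m) => [vm|] //= fmj.
  move: Evm; rewrite /v /shift circE; case mT: (m \in bar T) => //.
  case Ep': (p (symd T [set m.1])) => [pv|] //= [Evm].
  have m1j : m.1 != j.1.
    by apply: contraNneq mj => h; apply/eqP; apply: (@bar_same1 _ T m j h); rewrite mT jT.
  have mS : m \in bar Sm by move: mT; rewrite in_bar_symd1 (negbTE m1j) addbF.
  pose S' := symd T [set m.1].
  have Hbar k : (k \in bar S') = (k \in bar Sm) (+) (k.1 == m.1) (+) (k.1 == j.1).
    by rewrite !in_bar_symd1 addbAC.
  have mA : m \in A by rewrite inA Exm.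
  have jA : j \in A by rewrite inA Ex.
  have HS := swap_set adm mS mA jS m1j Hbar jA.
  have jX : j \notin (bar Sm :&: A) :\ m by rewrite in_setD1 in_setI (negbTE jS) andbF.
  have mX : m \in bar Sm :&: A by rewrite in_setI mS mA.
  have NS' : N S' = N Sm.
    by rewrite /N HS cardsU1 jX [#|bar Sm :&: A|](cardsD1 m) mX.
  pose Sg := \sum_(k in (bar Sm :&: A) :\ m) xr k.
  have FS' : F S' = pv - (xjv + Sg).
    by rewrite /F HS big_setU1 //= /pr Ep' /xr Ex.
  have FSm' : F Sm = ps - (xm + Sg).
    by rewrite /F (big_setD1 m mX) /= /pr E /xr Exm.
  have GS' : Good S' by rewrite /Good Ep' NS' NSm eqxx.
  have le1 : F S' <= F Sm by rewrite FS' FSm'; lra.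
  exists S'; split; first by split => // S'' G''; apply: le_trans le1 (FSm _ G'').
  by rewrite Hbar (negbTE jS) eqxx eq_sym (negbTE m1j).
case: C1 => S [[GS FS] jS].
move/andP: (GS) => [pS /eqP NS].
case E: (p S) pS => [ps|] // _.
case Ex: (x j) xj => [xjv|] // _.
pose T := symd S [set j.1].
have jT : j \notin bar T by rewrite in_bar_symd1 jS eqxx.
pose y := shift (cocirc p T) (xjv - ps).
have yj : y j = Some xjv by rewrite /y /shift cocircE jT symdK1 E /=; congr Some; rewrite addrC subrK.
exists y; split; last split.
- by exists T, (xjv - ps); split => //; apply/set0Pn; exists j; rewrite inE yj.
- by rewrite yj.
move=> k; rewrite /y /shift cocircE.
case kT: (k \in bar T) => /=; first exact: tle_None.
case Ep': (p (symd T [set k.1])) => [pv|] /=; last exact: tle_None.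
have [kj|kj] := eqVneq k.1 j.1.
  have ek : k = j by apply: (@bar_same1 _ T k j kj); rewrite kT (negbTE jT).
  subst k; move: Ep'; rewrite symdK1 E => [[<-]]; rewrite Ex /= addrC subrK.
  exact: lexx.
have kS : k \notin bar S by move: kT; rewrite in_bar_symd1 (negbTE kj) addbF => ->.
pose S' := symd T [set k.1].
have Hbar k' : (k' \in bar S') = (k' \in bar S) (+) (k'.1 == j.1) (+) (k'.1 == k.1).
  by rewrite !in_bar_symd1.
have jA : j \in A by rewrite inA Ex.
have jk1 : j.1 != k.1 by rewrite eq_sym.
have pS' : p S' != None by rewrite /S' Ep'.
have jX : j \in bar S :&: A by rewrite in_setI jS jA.
have [kA|kA] := boolP (k \in A); last first.
  have sub := swap_sub adm jS jA kS jk1 Hbar kA.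
  have h1 := HminS S' pS'.
  have h2 := subset_leq_card sub.
  have c1 := cardsD1 j (bar S :&: A); rewrite jX in c1.
  have NS2 : #|bar S :&: A| = N0 by exact: NS.
  have h1' : (N0 <= #|bar S' :&: A|)%N by exact: h1.
  have : (N0 < N0)%N.
    rewrite -{2}NS2 c1; apply: leq_ltn_trans h1' (leq_ltn_trans h2 _).
    by rewrite /= add1n ltnSn.
  by rewrite ltnn.
have HS := swap_set adm jS jA kS jk1 Hbar kA.
case Exk: (x k) kA => [xk|]; last by rewrite inA Exk.
move=> kA.
have kX : k \notin (bar S :&: A) :\ j by rewrite in_setD1 in_setI (negbTE kS) andbF.
have NS' : N S' = N S.
  by rewrite /N HS cardsU1 kX [#|bar S :&: A|](cardsD1 j) jX.
pose Sg := \sum_(k' in (bar S :&: A) :\ j) xr k'.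
have FS' : F S' = pv - (xk + Sg).
  by rewrite /F HS big_setU1 //= /pr Ep' /xr Exk.
have FS0 : F S = ps - (xjv + Sg).
  by rewrite /F (big_setD1 j jX) /= /pr E /xr Ex.
have GS' : Good S' by rewrite /Good pS' NS' NS eqxx.
have := FS _ GS'; rewrite FS' FS0 /= => h; lra.
Qed.

Lemma tconv_of (R : realType) n (P : ('I_n * bool -> option R) -> Prop) (x : 'I_n * bool -> option R) :
  (forall j, x j != None -> exists y, P y /\ y j = x j /\ forall k, tle (x k) (y k)) ->
  tconv P x.
Proof.
move=> H.
have [allN|] := boolP [forall j, x j == None].
  exists 0, (fun _ => x), (fun _ => None); split; first by case.
  by move=> j; rewrite big_ord0; apply/eqP; move/forallP: allN; apply.
rewrite negb_forall => /existsP [j0 xj0].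
have H' j : exists y, x j != None -> P y /\ y j = x j /\ forall k, tle (x k) (y k).
  have [xj|xj] := boolP (x j != None).
    by case: (H j xj) => y Hy; exists y.
  by exists x.
pose g j := proj1_sig (constructive_indefinite_description _ (H' j)).
have Hg j : x j != None -> P (g j) /\ g j j = x j /\ forall k, tle (x k) (g j k).
  exact: (proj2_sig (constructive_indefinite_description _ (H' j))).
exists #|{: 'I_n * bool}|.
exists (fun k => if x (enum_val k) != None then g (enum_val k) else g j0).
exists (fun k => if x (enum_val k) != None then Some 0 else None).
split.
  move=> k; case: ifP => h; first by case: (Hg _ h).
  by case: (Hg _ xj0).
move=> j; apply: tle_anti.
  case: (big_tmin_attained (fun k : 'I_#|{: 'I_n * bool}| => tadd (if x (enum_val k) != None then Some 0 else None)
     ((if x (enum_val k) != None then g (enum_val k) else g j0) j))) => [->|[k ->]].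
    exact: tle_None.
  case: ifP => h /=; last exact: tle_None.
  case: (Hg _ h) => _ [_ hk]; move: (hk j); by case: (g _ j) => //=; case: (x j) => // a b; rewrite addrC addr0.
have [xj|xj] := boolP (x j != None); last by move/negPn/eqP: xj => ->; exact: tle_None.
apply: tle_trans (big_tmin_le (fun k : 'I_#|{: 'I_n * bool}| => tadd (if x (enum_val k) != None then Some 0 else None)
     ((if x (enum_val k) != None then g (enum_val k) else g j0) j)) (enum_rank j)) _.
rewrite enum_rankK xj; case: (Hg _ xj) => _ [-> _].
by case: (x j) => //= a; rewrite add0r lexx.
Qed.

Theorem theorem6p9 (R : realType) (n : nat) (p : {set 'I_n} -> option R) :
  wick p -> (exists S, p S != None) ->
  forall x : 'I_n * bool -> option R,
    cocycle p x <-> (admissible x /\ tconv (is_cocircuit p) x).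
Proof.
move=> W ex x; split.
  move=> [adm orth]; split => //; apply: tconv_of; exact: hard.
move=> [adm [r [a [lam [Ha Hx]]]]]; split => // v [T [mu [Hv _]]].
apply: (torth_conv (a := a) (lam := lam)) => // k.
case: (Ha k) => U [l [Hy _]].
apply: (torth_ext Hy Hv); exact: cocirc_circ_orth.
Qed.
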